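(* Let $k,d,b,\tilde b\ge0$ be measurable on $\mathbb{R}_+$ with $\int_0^{+\infty}k=\int_0^{+\infty}d=+\infty$ and $1<\int_0^{+\infty}\big(b(a)e^{-\int_0^ak}+\tilde b(a)e^{-\int_0^ad}\big)da<+\infty$. Let the competition functions be linear: $\eta(N_1,N_2)=\eta_1N_1+\eta_2N_2$, $c(N_1,N_2)=c_1N_1+c_2N_2$, $\tilde c(N_1,N_2)=\tilde c_1N_1+\tilde c_2N_2$ with nonnegative coefficients, and put $c_1^{tot}=\eta_1+c_1$, $c_2^{tot}=\eta_2+c_2$, $c_{tot}=c+\eta$. Assume $c_1^{tot}>0$, $\tilde c_2>0$ and $c_1^{tot}\ge c_2^{tot}$. Then every nonnegative solution $(N_1^*,N_2^* )$ of $$\int_0^{+\infty}\tilde b(a)e^{-\int_0^ad-\tilde c(N_1,N_2)a}da\cdot\int_0^{+\infty}\big(k(a)+\eta(N_1,N_2)\big)e^{-\int_0^ak-c_{tot}(N_1,N_2)a}da+\int_0^{+\infty}b(a)e^{-\int_0^ak-c_{tot}(N_1,N_2)a}da=1,$$ $$N_1\int_0^{+\infty}e^{-\int_0^ad-\tilde c(N_1,N_2)a}da\cdot\int_0^{+\infty}\big(k(a)+\eta(N_1,N_2)\big)e^{-\int_0^ak-c_{tot}(N_1,N_2)a}da-N_2\int_0^{+\infty}e^{-\int_0^ak-c_{tot}(N_1,N_2)a}da=0$$ satisfies $N_1^*+N_2^*\ge N^*$, where $N^*=\mu_0/c_1^{tot}$ if $\int_0^{+\infty}b(a)e^{-\int_0^ak}da>1$,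 with $\mu_0>0$ the unique solution of $\int_0^{+\infty}b(a)e^{-\int_0^ak(u)du-\mu_0a}da=1$, and $N^*=0$ otherwise.
   Context: $N^*$ is the total steady-state population of the one-phase model $\partial_tn+\partial_an=-(k(a)+c_{tot}(N(t),0))n$, $n(t,0)=\int bn$. *)

(* Defs.v *)
From HB Require Import structures.
From mathcomp Require Import all_boot all_order all_algebra.
From mathcomp Require Import all_classical all_reals all_analysis.
Set Implicit Arguments. Unset Strict Implicit. Unset Printing Implicit Defensive.
Import Order.TTheory GRing.Theory Num.Theory.
Local Open Scope classical_set_scope.
Local Open Scope ring_scope.
Local Open Scope ereal_scope.

Definition int0 (R : realType) (f : R -> \bar R) : \bar R :=
  \int[@lebesgue_measure R]_(a in `[0%R, +oo[) f a.

(* survival factor  e^{- int_0^a k(u) du}  (= 0 if the inner integral is +oo) *)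
Definition surv (R : realType) (k : R -> R) (a : R) : \bar R :=
  expeR (- \int[@lebesgue_measure R]_(u in `[0%R, a]) (k u)%:E).

Definition R0 (R : realType) (k b : R -> R) : \bar R :=
  int0 (fun a => (b a)%:E * surv k a).

Definition mu0_eq (R : realType) (k b : R -> R) (mu : R) : Prop :=
  int0 (fun a => (b a)%:E * surv k a * (expR (- (mu * a)))%:E) = 1.

Definition Nstar (R : realType) (k b : R -> R) (c1tot : R) : R :=
  if (1 < R0 k b) then (xget 0%R [set mu | (0 < mu)%R /\ mu0_eq k b mu] / c1tot)%R
  else 0%R.

(* Main.v *)
Require Import Defs.
From HB Require Import structures.
From mathcomp Require Import all_boot all_order all_algebra.
From mathcomp Require Import all_classical all_reals all_analysis.
From mathcomp Require Import measurable_realfun.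
From mathcomp Require Import ring lra.
Import Order.TTheory GRing.Theory Num.Theory.
Local Open Scope classical_set_scope.
Local Open Scope ring_scope.
Local Open Scope ereal_scope.

Section Surv.
Variables (R : realType) (k : R -> R).
Hypothesis hk0 : forall a : R, (0 <= a)%R -> (0 <= k a)%R.
Hypothesis hkm : measurable_fun (`[0%R, +oo[ : set R) k.

Lemma Ik_ge0 a : 0 <= \int[@lebesgue_measure R]_(u in `[0%R, a]) (k u)%:E.
Proof.
apply: integral_ge0 => u /=; rewrite in_itv /= => /andP[h _].
by rewrite lee_fin hk0.
Qed.

Lemma surv_fin a : surv k a = (fine (surv k a))%:E.
Proof.
rewrite /surv; have := Ik_ge0 a.
case: (\int[_]_(_ in _) _) => [r| |] //=.
Qed.

Lemma surv_ge0 a : (0 <= fine (surv k a))%R.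
Proof. by rewrite -lee_fin -surv_fin /surv expeR_ge0. Qed.

Lemma surv_noninc : nonincreasing_fun (fun a => fine (surv k a)).
Proof.
move=> x y xy.
rewrite -lee_fin -!surv_fin /surv lee_expeR leeN2.
have [y0|y0] := leP 0%R y.
- apply: ge0_subset_integral => //.
  + have sub : `[0%R, y] `<=` (`[0%R, +oo[ : set R).
      by move=> u /=; rewrite !in_itv /= => /andP[->].
    have h := (measurable_realfun.measurable_EFinP _ _).2 hkm.
    exact: (measurable_funS (measurable_itv _) sub h).
  + by move=> u /=; rewrite in_itv /= => /andP[h _]; rewrite lee_fin hk0.
  + by move=> u /=; rewrite !in_itv /= => /andP[-> h] /=; rewrite (le_trans h).
- rewrite integral0_eq; first exact: Ik_ge0.
  move=> u /=; rewrite in_itv /= => /andP[h1 h2].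
  by have := lt_le_trans (le_lt_trans h1 (le_lt_trans (le_trans h2 xy) y0)) (lexx 0%R); rewrite ltxx.
Qed.

Lemma surv_meas : measurable_fun (`[0%R, +oo[ : set R) (fun a => fine (surv k a)).
Proof. apply: nonincreasing_measurable => //; exact: surv_noninc. Qed.

End Surv.

Lemma aux1 (R : realType) (x y : R) : (0 < x)%R -> (1 + x <= y)%R -> (y <= 1)%R -> False.
Proof. move=> *; lra. Qed.

Theorem corollary1 (R : realType) (k d b bt : R -> R)
  (eta1 eta2 c1 c2 ct1 ct2 : R)
  (hk0 : forall a : R, (0 <= a)%R -> (0 <= k a)%R)
  (hd0 : forall a : R, (0 <= a)%R -> (0 <= d a)%R)
  (hb0 : forall a : R, (0 <= a)%R -> (0 <= b a)%R)
  (hbt0 : forall a : R, (0 <= a)%R -> (0 <= bt a)%R)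
  (hkm : measurable_fun (`[0%R, +oo[ : set R) k)
  (hdm : measurable_fun (`[0%R, +oo[ : set R) d)
  (hbm : measurable_fun (`[0%R, +oo[ : set R) b)
  (hbtm : measurable_fun (`[0%R, +oo[ : set R) bt)
  (hkinf : int0 (fun a => (k a)%:E) = +oo)
  (hdinf : int0 (fun a => (d a)%:E) = +oo)
  (hR1 : 1 < int0 (fun a => (b a)%:E * surv k a + (bt a)%:E * surv d a))
  (hR2 : int0 (fun a => (b a)%:E * surv k a + (bt a)%:E * surv d a) < +oo)
  (heta1 : (0 <= eta1)%R) (heta2 : (0 <= eta2)%R)
  (hc1 : (0 <= c1)%R) (hc2 : (0 <= c2)%R)
  (hct1 : (0 <= ct1)%R) (hct2 : (0 <= ct2)%R)
  (hc1tot : (0 < eta1 + c1)%R) (hct2pos : (0 < ct2)%R)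
  (hcomp : (eta2 + c2 <= eta1 + c1)%R)
  (N1 N2 : R) (hN1 : (0 <= N1)%R) (hN2 : (0 <= N2)%R) :
  let eta := (eta1 * N1 + eta2 * N2)%R in
  let ct := (ct1 * N1 + ct2 * N2)%R in
  let ctot := ((eta1 + c1) * N1 + (eta2 + c2) * N2)%R in
  let Ek := fun a => surv k a * (expR (- (ctot * a)))%:E in
  let Ed := fun a => surv d a * (expR (- (ct * a)))%:E in
  int0 (fun a => (bt a)%:E * Ed a) * int0 (fun a => (k a + eta)%:E * Ek a)
    + int0 (fun a => (b a)%:E * Ek a) = 1 ->
  N1%:E * int0 Ed * int0 (fun a => (k a + eta)%:E * Ek a)
    - N2%:E * int0 Ek = 0 ->
  (Nstar k b (eta1 + c1) <= N1 + N2)%R.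
Proof.
move=> eta ct ctot Ek Ed H1 H2.
set D : set R := (`[0%R, +oo[%classic : set R).
have mD : measurable D by exact: measurable_itv.
have Dge0 a : D a -> (0 <= a)%R by rewrite /D /= in_itv /= andbT.
have eta0 : (0 <= eta)%R by rewrite /eta addr_ge0 // mulr_ge0.
have C1 : int0 (fun a => (b a)%:E * Ek a) <= 1.
  rewrite -H1; apply: leeDr; apply: mule_ge0; apply: integral_ge0 => a /Dge0 a0.
  - apply: mule_ge0; first by rewrite lee_fin hbt0.
    by apply: mule_ge0; [exact: expeR_ge0|rewrite lee_fin expR_ge0].
  - apply: mule_ge0; first by rewrite lee_fin addr_ge0 // hk0.
    by apply: mule_ge0; [exact: expeR_ge0|rewrite lee_fin expR_ge0].
rewrite /Nstar; case: ifP => _; last by rewrite addr_ge0.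
case: xgetP => [m _ [m0 meq]|_]; last by rewrite mul0r addr_ge0.
rewrite ler_pdivrMr //.
suff hm : (m <= ctot)%R.
  apply: (le_trans hm); rewrite /ctot; nra.
rewrite leNgt; apply/negP => hlt.
pose del := (m - ctot)%R.
have del0 : (0 < del)%R by rewrite /del subr_gt0.
pose s := fun a => fine (surv k a).
pose g := fun a => (b a * s a * expR (- (m * a)))%R.
pose g2 := fun a => (g a * (expR (del * a) - 1))%R.
have ms : measurable_fun D s by exact: surv_meas.
have mexp (c : R) : measurable_fun D (fun a => expR (- (c * a))).
  apply: (measurableT_comp (f := expR)); first exact: measurable_expR.
  by apply: measurable_funN; exact: mulrl_measurable.
have mexp' : measurable_fun D (fun a => expR (del * a) - 1)%R.
  apply: measurable_funB; last exact: measurable_cst.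
  apply: (measurableT_comp (f := expR)); first exact: measurable_expR.
  exact: mulrl_measurable.
have mg : measurable_fun D g.
  by apply: measurable_funM; [apply: measurable_funM|exact: mexp].
have mg2 : measurable_fun D g2 by apply: measurable_funM.
have mEg : measurable_fun D (fun a => (g a)%:E) by apply/measurable_EFinP.
have mEg2 : measurable_fun D (fun a => (g2 a)%:E) by apply/measurable_EFinP.
have hg0 a : D a -> (0 <= g a)%R.
  move=> /Dge0 a0; rewrite /g mulr_ge0 // mulr_ge0 // ?hb0 //; exact: surv_ge0.
have hexp1 a : D a -> (1 <= expR (del * a))%R.
  move=> /Dge0 a0; apply: le_trans (expR_ge1Dx _); rewrite lerDl; apply: mulr_ge0 => //; exact: ltW.
have hg20 a : D a -> (0 <= g2 a)%R.
  by move=> Da; rewrite /g2 mulr_ge0 ?hg0 // subr_ge0 hexp1.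
have E1 : int0 (fun a => (b a)%:E * surv k a * (expR (- (m * a)))%:E)
    = \int[lebesgue_measure]_(a in D) (g a)%:E.
  by apply: eq_integral => a _; rewrite (@surv_fin R k hk0) -!EFinM.
have E2 : int0 (fun a => (b a)%:E * Ek a)
    = \int[lebesgue_measure]_(a in D) ((g a)%:E + (g2 a)%:E).
  apply: eq_integral => a _; rewrite /Ek (@surv_fin R k hk0) -!EFinM -EFinD; congr EFin.
  have ee : expR (- (ctot * a)) = (expR (- (m * a)) * expR (del * a))%R.
    by rewrite -expRD /del; congr expR; ring.
  by rewrite ee /g2 /g /s; ring.
have hI : \int[lebesgue_measure]_(a in D) ((g a)%:E + (g2 a)%:E)
    = \int[lebesgue_measure]_(a in D) (g a)%:E + \int[lebesgue_measure]_(a in D) (g2 a)%:E.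
  apply: ge0_integralD => // a Da; by rewrite lee_fin ?hg0 ?hg20.
rewrite E2 hI in C1.
rewrite -E1 meq in C1.
have Ig20 : \int[lebesgue_measure]_(a in D) (g2 a)%:E = 0.
  have y0 : 0 <= \int[lebesgue_measure]_(a in D) (g2 a)%:E.
    by apply: integral_ge0 => a Da; rewrite lee_fin hg20.
  move: C1 y0; case: (\int[_]_(_ in _) _) => [r| |] //=.
  rewrite -EFinD !lee_fin => h1 h2; apply/eqP; rewrite eqe; apply/eqP; lra.
have ae1 : ae_eq lebesgue_measure D (fun a => (g2 a)%:E) (cst 0).
  apply/ae_eq_integral_abs => //; rewrite -Ig20; apply: eq_integral => a.
  by rewrite inE => Da; rewrite gee0_abs // lee_fin hg20.
have mD' : measurable (D `\ 0%R) by apply: measurableD.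
have sD' : D `\ 0%R `<=` D by move=> a [].
have ae2 : ae_eq lebesgue_measure (D `\ 0%R) (fun a => (g a)%:E) (cst 0).
  move: ae1; rewrite /ae_eq; apply: filterS => a h [Da na0].
  have := h Da; rewrite /= => -[] /eqP; rewrite mulf_eq0 => /orP[/eqP->//|].
  have a0 : (0 < a)%R by rewrite lt_neqAle eq_sym; apply/andP; split; [apply/eqP|exact: Dge0].
  have := expR_ge1Dx (del * a); have : (0 < del * a)%R by rewrite mulr_gt0.
  rewrite subr_eq0 => h1 h2 /eqP h3; exfalso; apply: (@aux1 _ _ _ h1 h2); by rewrite h3.
have hh : \int[lebesgue_measure]_(a in D `\ 0%R) (g a)%:E
    = \int[lebesgue_measure]_(a in D `\ 0%R) (cst 0 a).
  apply: ae_eq_integral ae2 => //.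
  exact: (measurable_funS mD sD' mEg).
move: hh; rewrite integral_setD1 //; last exact: (measurable_funS mD sD' mEg).
rewrite integral0 => h.
by move: meq; rewrite /mu0_eq E1 h => /eqP; rewrite eqe eq_sym oner_eq0.
Qed.
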